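(* Let $p$ be a prime, $c\ge1$, $G$ a finite $p$-group, $B$ a cyclic subgroup of $Z(G)$ of order $p^k$, and suppose $A=G/B$ is generated by $d$ elements. Let $G\cong F/R$ with $F$ free, and let $S$ be the normal subgroup of $F$ containing $R$ with $B=S/R$ (so $A\cong F/S$). Then $$\left|\,[S,{}_cF]/[R,{}_cF]\,\right|\le p^{dk(d+1)^{c-1}}.$$
   Context: For subgroups $U,V$ of a group, $[U,{}_0V]=U$ and $[U,{}_{i+1}V]=[[U,{}_iV],V]$. *)

(* Defs.v *)
(* the finite p-group G lives in a finGroupType; the (infinite)
   free group F is an abstract group given by an explicit carrier and axioms. *)
From HB Require Import structures.
From mathcomp Require Import all_boot all_fingroup all_solvable.
Set Implicit Arguments. Unset Strict Implicit. Unset Printing Implicit Defensive.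

Record grp := Grp {
  gcar :> Type;
  gmul : gcar -> gcar -> gcar;
  ginv : gcar -> gcar;
  gone : gcar;
  gmulA : forall x y z, gmul x (gmul y z) = gmul (gmul x y) z;
  gmul1 : forall x, gmul gone x = x;
  gmulV : forall x, gmul (ginv x) x = gone }.

Arguments gmul {g}. Arguments ginv {g}. Arguments gone {g}.

Definition is_ghom (F H : grp) (f : F -> H) : Prop :=
  forall x y, f (gmul x y) = gmul (f x) (f y).

Definition is_free (F : grp) : Prop :=
  exists (X : Type) (iota : X -> F),
    forall (H : grp) (f : X -> H),
      exists h : F -> H,
        [/\ is_ghom h, (forall x, h (iota x) = f x) &
            forall h' : F -> H, is_ghom h' -> (forall x, h' (iota x) = f x) ->
              forall y, h' y = h y].

(* Commutator [x, y] = x^-1 y^-1 x y (MathComp convention). *)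
Definition gcomm (F : grp) (x y : F) : F :=
  gmul (gmul (ginv x) (ginv y)) (gmul x y).

Inductive gen (F : grp) (P : F -> Prop) : F -> Prop :=
  | gen_in x : P x -> gen P x
  | gen_one : gen P gone
  | gen_inv x : gen P x -> gen P (ginv x)
  | gen_mul x y : gen P x -> gen P y -> gen P (gmul x y).

Definition commg_sub (F : grp) (U V : F -> Prop) : F -> Prop :=
  gen (fun z => exists u v, [/\ U u, V v & z = gcomm u v]).

Fixpoint iter_comm (F : grp) (U V : F -> Prop) (n : nat) : F -> Prop :=
  match n with
  | 0 => U
  | n'.+1 => commg_sub (iter_comm U V n') V
  end.

Definition gfull (F : grp) : F -> Prop := fun _ => True.

(* index_le H K n : the coset space H/K (K a subgroup of H) has at most n
   elements, i.e. at most n left cosets t K (t in H) cover H. *)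
Definition index_le (F : grp) (H K : F -> Prop) (n : nat) : Prop :=
  exists l : seq F,
    [/\ size l <= n,
        (forall i, i < size l -> H (nth gone l i)) &
        (forall h, H h -> exists2 i, i < size l & K (gmul (ginv (nth gone l i)) h))].

(* Main.v *)
Require Import Defs.
From HB Require Import structures.
From mathcomp Require Import all_boot all_fingroup all_solvable.
Set Implicit Arguments. Unset Strict Implicit. Unset Printing Implicit Defensive.

Section GrpLemmas.
Variable F : grp.
Implicit Types x y z : F.

Lemma gmulA' x y z : gmul (gmul x y) z = gmul x (gmul y z).
Proof. by rewrite gmulA. Qed.
Lemma gmulgV x : gmul x (ginv x) = gone.
Proof.
have e : gmul (ginv (ginv x)) (ginv x) = gone by rewrite gmulV.
rewrite -[gmul x _]gmul1 -{1}e -gmulA (gmulA (ginv x)) gmulV gmul1.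
by rewrite e.
Qed.
Lemma gmulg1 x : gmul x gone = x.
Proof. by rewrite -(gmulV x) gmulA gmulgV gmul1. Qed.
Lemma gmulKV x y : gmul (ginv x) (gmul x y) = y.
Proof. by rewrite gmulA gmulV gmul1. Qed.
Lemma gmulVK x y : gmul x (gmul (ginv x) y) = y.
Proof. by rewrite gmulA gmulgV gmul1. Qed.
Lemma ginv_uniq x y : gmul x y = gone -> ginv x = y.
Proof. by move=> e; rewrite -[ginv x]gmulg1 -e gmulKV. Qed.
Lemma ginvK x : ginv (ginv x) = x.
Proof. by apply: ginv_uniq; rewrite gmulV. Qed.
Lemma ginvM x y : ginv (gmul x y) = gmul (ginv y) (ginv x).
Proof. by apply: ginv_uniq; rewrite gmulA' gmulVK gmulgV. Qed.
Lemma ginv1 : ginv (gone : F) = gone.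
Proof. by apply: ginv_uniq; rewrite gmulg1. Qed.
End GrpLemmas.

Ltac gnorm := rewrite /gcomm;
  repeat progress rewrite ?gmulA' ?gmul1 ?gmulg1 ?gmulV ?gmulgV ?gmulKV ?gmulVK ?ginvM ?ginvK ?ginv1.

Definition gconj (F : grp) (x g : F) := gmul (ginv g) (gmul x g).

Lemma hall_witt (F : grp) (v f w : F) :
  gcomm (gcomm v f) w = gconj (ginv (gmul (gconj (gcomm (gcomm (ginv f) (ginv w)) v) w)
        (gconj (gcomm (gcomm w (ginv v)) (ginv f)) v))) f.
Proof. by rewrite /gconj; gnorm. Qed.

Section Sub.
Variable F : grp.
Implicit Types x y z f g : F.
Implicit Types U V H K : F -> Prop.

Definition subgrp H := [/\ H gone, (forall x y, H x -> H y -> H (gmul x y)) &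
   (forall x, H x -> H (ginv x))].
Definition normp H := subgrp H /\ forall x g, H x -> H (gconj x g).

Lemma gen_sub P : subgrp (gen P).
Proof. split; [exact: gen_one | exact: gen_mul | exact: gen_inv]. Qed.

Lemma gen_min P H : subgrp H -> (forall x, P x -> H x) -> forall x, gen P x -> H x.
Proof. case=> H1 HM HV sPH x; elim=> //; auto. Qed.

Lemma gen_normal P : (forall x g, P x -> P (gconj x g)) -> normp (gen P).
Proof.
move=> cP; split; first exact: gen_sub.
move=> x g; elim=> [y Py|| y _ IH| y z _ IHy _ IHz].
- by apply: gen_in; apply: cP.
- have -> : gconj (gone : F) g = gone by rewrite /gconj; gnorm.
  exact: gen_one.
- have -> : gconj (ginv y) g = ginv (gconj y g) by rewrite /gconj; gnorm.
  exact: gen_inv.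
- have -> : gconj (gmul y z) g = gmul (gconj y g) (gconj z g) by rewrite /gconj; gnorm.
  exact: gen_mul.
Qed.

Lemma comm_normal U : normp U -> normp (Defs.commg_sub U (@gfull F)).
Proof.
move=> [_ cU]; apply: gen_normal => z g [u [v [Uu _ ->]]].
exists (gconj u g), (gconj v g); split => //; first exact: cU.
by rewrite /gconj; gnorm.
Qed.

Lemma iter_normal U n : normp U -> normp (iter_comm U (@gfull F) n).
Proof. by move=> nU; elim: n => //= n IH; apply: comm_normal. Qed.

Lemma iter_mono U U' n : (forall x, U x -> U' x) ->
  forall x, iter_comm U (@gfull F) n x -> iter_comm U' (@gfull F) n x.
Proof.
move=> sU; elim: n => //= n IH; apply: gen_min; first exact: gen_sub.
move=> z [u [v [Uu Vv ->]]]; apply: gen_in; exists u, v; split => //; exact: IH.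
Qed.

Lemma iter_shift U V n : iter_comm U V n.+1 = iter_comm (Defs.commg_sub U V) V n.
Proof. by elim: n => //= n ->. Qed.

Lemma comm_gen U x f : U x -> iter_comm U (@gfull F) 1 (gcomm x f).
Proof. by move=> Ux; apply: gen_in; exists x, f. Qed.

Lemma comm_genS U n x f : iter_comm U (@gfull F) n x ->
  iter_comm U (@gfull F) n.+1 (gcomm x f).
Proof. by move=> Ux; apply: gen_in; exists x, f. Qed.

Lemma gcommV x y : ginv (gcomm x y) = gcomm y x.
Proof. by gnorm. Qed.

Lemma sub1 H : subgrp H -> H gone. Proof. by case. Qed.
Lemma subM H x y : subgrp H -> H x -> H y -> H (gmul x y). Proof. by case=> _ M _; apply: M. Qed.
Lemma subV H x : subgrp H -> H x -> H (ginv x). Proof. by case=> _ _ V; apply: V. Qed.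
Lemma subVr H x : subgrp H -> H (ginv x) -> H x.
Proof. by move=> sH /(subV sH); rewrite ginvK. Qed.

End Sub.


Section SR.
Variable F : grp.
Variables U R : F -> Prop.
Hypothesis nU : normp U.
Hypothesis nR : normp R.
Local Notation Ui i := (iter_comm U (@gfull F) i).
Local Notation Ri i := (iter_comm R (@gfull F) i).

Lemma SR_lemma i : forall j u w, Ui i u -> Ri j w -> Ri (i + j).+1 (gcomm u w).
Proof.
elim: i => [|i IH] j u w.
  move=> Uu Rw; rewrite -gcommV; apply: subV; first exact: (iter_normal _ nR).1.
  exact: comm_genS.
move=> Uu Rw; have nK := iter_normal (i.+1 + j).+1 nR.
have sK := nK.1.
elim: Uu => [z [v [f [Uv _ ->]]]||y _ IHy| y z _ IHy _ IHz].
- rewrite hall_witt; apply: nK.2; apply: subV => //; apply: subM => //; apply: nK.2.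
  + rewrite -gcommV; apply: subV => //.
    have := IH j.+1 v (gcomm (ginv f) (ginv w)) Uv.
    rewrite addnS addSn; apply.
    rewrite -gcommV; apply: subV; first exact: (iter_normal _ nR).1.
    apply: comm_genS; apply: subV => //; exact: (iter_normal _ nR).1.
  + rewrite addSn; apply: comm_genS; rewrite -gcommV;  apply: subV; first exact: (iter_normal _ nR).1.
    apply: IH => //; apply: subV => //; exact: (iter_normal _ nU).1.
- have -> : gcomm (gone : F) w = gone by gnorm.
  exact: sub1.
- have -> : gcomm (ginv y) w = ginv (gconj (gcomm y w) (ginv y)) by rewrite /gconj; gnorm.
  by apply: subV => //; apply: nK.2.
- have -> : gcomm (gmul y z) w = gmul (gconj (gcomm y w) z) (gcomm z w) by rewrite /gconj; gnorm.
  by apply: subM => //; apply: nK.2.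
Qed.
End SR.


Fixpoint gpow (F : grp) (x : F) (e : nat) : F :=
  if e is e'.+1 then gmul x (gpow x e') else gone.

Fixpoint In (T : Type) (x : T) (s : seq T) : Prop :=
  if s is y :: s' then y = x \/ In x s' else False.

Definition prodl (A B C : Type) (f : A -> B -> C) (s : seq A) (t : seq B) : seq C :=
  foldr (fun x acc => map (f x) t ++ acc) [::] s.

Lemma size_prodl A B C (f : A -> B -> C) s t : size (prodl f s t) = size s * size t.
Proof. by elim: s => //= x s IH; rewrite size_cat size_map IH mulSn. Qed.

Lemma In_cat T (x : T) s1 s2 : In x (s1 ++ s2) <-> In x s1 \/ In x s2.
Proof.
elim: s1 => /=; first by intuition.
move=> y s [IH1 IH2]; split.
- by case=> [->|/IH1 [H|H]]; auto.
- by case=> [[->|H]|H]; auto.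
Qed.

Lemma In_map T T' (f : T -> T') (x : T') s : In x (map f s) <-> exists y, In y s /\ x = f y.
Proof.
elim: s x => /=; first by split => // [[y []]].
move=> y s IH x; have [IH1 IH2] := IH x; split.
- case=> [<-|/IH1 [z [Hz ->]]]; [by exists y; auto | by exists z; auto].
- case=> z [[<-|Hz] Ex]; first by left.
  by right; apply: IH2; exists z.
Qed.

Lemma In_prodl A B C (f : A -> B -> C) s t z :
  In z (prodl f s t) <-> exists x y, [/\ In x s, In y t & z = f x y].
Proof.
elim: s z => /=; first by split => // [[x [y []]]].
move=> x s IH z; have [IH1 IH2] := IH z; split.
- case/In_cat=> [/In_map [y [Hy ->]]|/IH1 [x' [y [Hx Hy ->]]]]; first by exists x, y; split; auto.
  by exists x', y; split; auto.
- case=> x' [y [[<-|Hx] Hy Ez]]; apply/In_cat; first by left; apply/In_map; exists y.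
  by right; apply: IH2; exists x', y.
Qed.

Lemma In_nth T (d : T) l i : i < size l -> In (nth d l i) l.
Proof. elim: l i => //= x l IH [|i] /=; auto. Qed.

Lemma nth_In T (d : T) l x : In x l -> exists2 i, i < size l & nth d l i = x.
Proof.
elim: l => //= y l IH [<-|/IH [i Hi <-]]; first by exists 0.
by exists i.+1.
Qed.

Lemma In_iota m n e : m <= e < m + n -> In e (iota m n).
Proof.
elim: n m => [|n IH] m /=; first by rewrite addn0 => /andP [H1 H2]; have := leq_ltn_trans H1 H2; rewrite ltnn.
case/andP; rewrite leq_eqVlt => /orP [/eqP ->|lt]; first by left.
by rewrite addnS => lt'; right; apply: IH; rewrite lt lt'.
Qed.

Section Count.
Variable F : grp.
Implicit Types x y z f g m t : F.

Lemma gpowD x a b : gpow x (a + b) = gmul (gpow x a) (gpow x b).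
Proof. by elim: a => /= [|a IH]; rewrite ?gmul1 // IH gmulA. Qed.

Lemma gpowC x a b : gmul (gpow x a) (gpow x b) = gmul (gpow x b) (gpow x a).
Proof. by rewrite -!gpowD addnC. Qed.

Variable K : F -> Prop.
Hypothesis nK : normp K.
Let sK := nK.1.

Definition centr z := forall f, K (gcomm z f).

Lemma centr_pow z e : centr z -> centr (gpow z e).
Proof.
move=> cz f; elim: e => /= [|e IH]; first have -> : gcomm (gone : F) f = gone by gnorm.
  exact: sub1.
have -> : gcomm (gmul z (gpow z e)) f = gmul (gconj (gcomm z f) (gpow z e)) (gcomm (gpow z e) f)
  by rewrite /gconj; gnorm.
by apply: subM => //; apply: nK.2.
Qed.

Definition genU (L : seq F) := gen (fun x => In x L \/ K x).

Variable N : nat.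
Hypothesis N_gt0 : 0 < N.

Fixpoint reps (L : seq F) : seq F :=
  if L is t :: L' then prodl (fun e r => gmul (gpow t e) r) (iota 0 N) (reps L') else [:: gone].

Lemma size_reps L : size (reps L) = N ^ size L.
Proof. by elim: L => //= t L IH; rewrite size_prodl size_iota IH expnS. Qed.

Lemma reps_gen L r : In r (reps L) -> genU L r.
Proof.
elim: L r => /= [|t L IH] r; first by case=> // <-; apply: gen_one.
case/In_prodl => e [r' [_ Hr' ->]].
apply: gen_mul.
  elim: e {Hr'} => /= [|e IHe]; first exact: gen_one.
  by apply: gen_mul => //; apply: gen_in; left; left.
have := IH _ Hr'; apply: gen_min; first exact: gen_sub.
by move=> x [Hx|Hx]; apply: gen_in; [left; right|right].
Qed.

Lemma peel t L : centr t -> K (gpow t N) ->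
  forall h, genU (t :: L) h -> exists2 e, e < N & genU L (gmul (ginv (gpow t e)) h).
Proof.
move=> ct tN.
have sM : subgrp (genU L) := gen_sub _.
have KM : forall x, K x -> genU L x by move=> x Kx; apply: gen_in; right.
have red : forall e h, e < N + N -> genU L (gmul (ginv (gpow t e)) h) ->
    exists2 e', e' < N & genU L (gmul (ginv (gpow t e')) h).
  move=> e h lt H; case: (ltnP e N) => [lt'|ge]; first by exists e.
  exists (e - N); first by rewrite ltn_subLR.
  have -> : gmul (ginv (gpow t (e - N))) h = gmul (gpow t N) (gmul (ginv (gpow t e)) h).
    by move: (e - N) (subnKC ge) => d <-; rewrite gpowD gpowC; gnorm.
  by apply: subM => //; apply: KM.
move=> h0; elim=> [x [[<-|Hx]|Kx]||h _ [e lte IH]|h1 h2 _ [e1 lt1 IH1] _ [e2 lt2 IH2]].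
- case: N N_gt0 tN => // [[_ tN|n _ _]].
    by exists 0 => //=; move: tN => /= ; rewrite gmulg1 ginv1 gmul1 => /KM.
  exists 1 => //=; rewrite gmulg1 gmulV; exact: sub1.
- exists 0 => //=; rewrite ginv1 gmul1; apply: gen_in; by left.
- exists 0 => //=; rewrite ginv1 gmul1; exact: KM.
- exists 0 => //=; rewrite ginv1 gmul1; exact: sub1.
- apply: (@red (N - e)); first by apply: leq_ltn_trans (leq_subr e N) _; rewrite -{1}(addn0 N) ltn_add2l.
  set m := gmul (ginv (gpow t e)) h in IH.
  have -> : h = gmul (gpow t e) m by rewrite /m; gnorm.
  have -> : gmul (ginv (gpow t (N - e))) (ginv (gmul (gpow t e) m)) =
    ginv (gmul (gpow t N) (gmul m (gcomm m (gpow t (N - e))))).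
    by move: (N - e) (subnKC (ltnW lte)) => d Hd; rewrite -Hd gpowD; gnorm.
  apply: subV => //; apply: subM => //; first exact: KM.
  apply: subM => //; apply: KM; rewrite -gcommV; apply: subV => //.
  exact: centr_pow.
- apply: (@red (e1 + e2)); first by rewrite -addSn; apply: leq_add lt1 (ltnW lt2).
  set m1 := gmul (ginv (gpow t e1)) h1 in IH1.
  set m2 := gmul (ginv (gpow t e2)) h2 in IH2.
  have -> : h1 = gmul (gpow t e1) m1 by rewrite /m1; gnorm.
  have -> : h2 = gmul (gpow t e2) m2 by rewrite /m2; gnorm.
  have -> : gmul (ginv (gpow t (e1 + e2))) (gmul (gmul (gpow t e1) m1) (gmul (gpow t e2) m2))
     = gmul m1 (gmul (gcomm m1 (gpow t e2)) m2) by rewrite gpowD; gnorm.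
  apply: subM => //; apply: subM => //; apply: KM; rewrite -gcommV; apply: subV => //.
  exact: centr_pow.
Qed.

Lemma count_reps L : (forall t, In t L -> centr t /\ K (gpow t N)) ->
  forall h, genU L h -> exists2 r, In r (reps L) & K (gmul (ginv r) h).
Proof.
elim: L => /= [_|t L IH hL] h.
  move=> /(gen_min sK) Kh; exists gone; first by left.
  by rewrite ginv1 gmul1; apply: Kh => x [[]|].
have [ct tN] := hL t (or_introl erefl).
move=> /(peel ct tN) [e lte /(IH (fun x Hx => hL x (or_intror Hx))) [r Hr Kr]].
exists (gmul (gpow t e) r).
  by apply/In_prodl; exists e, r; split => //; apply: In_iota; rewrite add0n lte.
by rewrite ginvM gmulA'.
Qed.

End Count.


Section Main.
Variable F : grp.
Variables R S : F -> Prop.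
Hypothesis nR : normp R.
Hypothesis nS : normp S.
Hypothesis sRS : forall x, R x -> S x.
Hypothesis cSF : forall s f, S s -> R (gcomm s f).
Variable N : nat.
Hypothesis N_gt0 : 0 < N.
Variable b : F.
Hypothesis Sb : S b.
Hypothesis RbN : R (gpow b N).
Hypothesis Sgen : forall s, S s -> exists e, R (gmul (ginv (gpow b e)) s).
Variable xs : seq F.
Hypothesis Fgen : forall f, gen (fun x => In x xs \/ S x) f.

Local Notation Si i := (iter_comm S (@gfull F) i).
Local Notation Ri i := (iter_comm R (@gfull F) i).

Lemma sR n : subgrp (Ri n). Proof. exact: (iter_normal n nR).1. Qed.
Lemma sS n : subgrp (Si n). Proof. exact: (iter_normal n nS).1. Qed.
Lemma cR n x g : Ri n x -> Ri n (gconj x g). Proof. exact: (iter_normal n nR).2. Qed.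

Lemma SR1 n x : Si n.+1 x -> Ri n x.
Proof.
rewrite iter_shift; apply: iter_mono; apply: gen_min; first exact: (sR 0).
by move=> z [u [v [Su _ ->]]]; apply: cSF.
Qed.

Lemma RS n x : Ri n x -> Si n x.
Proof. exact: iter_mono. Qed.

Lemma Fgen' f : gen (fun x => In x (b :: xs) \/ R x) f.
Proof.
have := Fgen f; apply: gen_min; first exact: gen_sub.
move=> x [Hx|Sx]; first by apply: gen_in; left; right.
have [e Re] := Sgen Sx.
have -> : x = gmul (gpow b e) (gmul (ginv (gpow b e)) x) by gnorm.
apply: gen_mul; last by apply: gen_in; right.
elim: e {Re} => /= [|e IH]; first exact: gen_one.
by apply: gen_mul => //; apply: gen_in; left; left.
Qed.

Lemma powlin n u f e : Si n u ->
  Ri n.+1 (gmul (ginv (gpow (gcomm u f) e)) (gcomm (gpow u e) f)).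
Proof.
move=> Su; elim: e => /= [|e IH].
  have -> : gmul (ginv gone) (gcomm (gone : F) f) = gone by gnorm.
  exact: (sub1 (sR n.+1)).
set a := gpow (gcomm u f) e in IH *; set c := gpow u e in IH *.
set k := gcomm (gcomm u f) c.
have Rk : Ri n.+1 k by apply: comm_genS; apply: SR1; apply: comm_genS.
have -> : gmul (ginv (gmul (gcomm u f) a)) (gcomm (gmul u c) f) =
   gmul (gconj k a) (gmul (ginv a) (gcomm c f)) by rewrite /k /gconj; gnorm.
by apply: (subM (sR n.+1)) => //; apply: cR.
Qed.

Definition Y n := if n is 0 then xs else b :: xs.
Fixpoint T n := if n is n'.+1 then prodl (@gcomm F) (T n') (Y n') else [:: b].

Lemma size_T n : size (T n.+1) = size xs * (size xs).+1 ^ n.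
Proof.
elim: n => [|n IH].
  by change (size (prodl (@gcomm F) [:: b] xs) = size xs * (size xs).+1 ^ 0); rewrite size_prodl /= mul1n expn0 muln1.
change (size (prodl (@gcomm F) (T n.+1) (b :: xs)) = size xs * (size xs).+1 ^ n.+1).
by rewrite size_prodl IH expnS /= -mulnA [(_ ^ n) * _]mulnC.
Qed.

Lemma mainclaim n :
  [/\ forall t, In t (T n) -> Si n t,
      forall t, In t (T n) -> Ri n (gpow t N) &
      forall u, Si n u -> genU (Ri n) (T n) u].
Proof.
elim: n => [|n [Ta Tb Tc]].
  split; [by move=> t [<-|[]] | by move=> t [<-|[]] | ].
  move=> u Su; have [e Re] := Sgen Su.
  have -> : u = gmul (gpow b e) (gmul (ginv (gpow b e)) u) by gnorm.
  apply: gen_mul; last by apply: gen_in; right.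
  elim: e {Re} => /= [|e IH]; first exact: gen_one.
  by apply: gen_mul => //; apply: gen_in; left; left.
split.
- move=> t' /In_prodl [t [y [Ht _ ->]]]; apply: comm_genS; exact: Ta.
- move=> t' /In_prodl [t [y [Ht _ ->]]].
  have := powlin y N (Ta _ Ht); set a := gpow _ N => Ha.
  have Rc : Ri n.+1 (gcomm (gpow t N) y) by apply: comm_genS; apply: Tb.
  have -> : a = gmul (gcomm (gpow t N) y) (ginv (gmul (ginv a) (gcomm (gpow t N) y))) by gnorm.
  by apply: subM (sR _) _ _ => //; apply: subV (sR _) _.
set M := genU (Ri n.+1) (T n.+1).
have sM : subgrp M := gen_sub _.
have RM : forall x, Ri n.+1 x -> M x by move=> x Rx; apply: gen_in; right.
have Tcomm : forall t, In t (T n) -> forall f, M (gcomm t f).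
  move=> t Ht f; have St := Ta _ Ht.
  have Rtf : forall f g, Ri n.+1 (gcomm (gcomm t f) g).
    by move=> f0 g; apply: comm_genS; apply: SR1; apply: comm_genS.
  have := Fgen' f; apply: (@gen_min _ _ (fun f => M (gcomm t f))).
    split.
    - have -> : gcomm t gone = gone by gnorm.
      exact: sub1.
    - move=> f1 g Mf Mg.
      have -> : gcomm t (gmul f1 g) =
         gmul (gcomm t g) (gmul (gcomm t f1) (gcomm (gcomm t f1) g)) by gnorm.
      by apply: subM => //; apply: subM => //; apply: RM.
    - move=> f1 Mf.
      have -> : gcomm t (ginv f1) =
         ginv (gmul (gcomm t f1) (gcomm (gcomm t f1) (ginv f1))) by gnorm.
      by apply: subV => //; apply: subM => //; apply: RM.
  move=> y [[<-|Hy]|Ry].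
  - case: (posnP n) => [n0|npos].
      have Tb0 : t = b by move: Ht; rewrite n0 => -[<-|[]].
      rewrite Tb0; have -> : gcomm b b = gone by gnorm.
      exact: sub1.
    apply: gen_in; left; apply/In_prodl; exists t, b; split => //.
    by case: (n) npos => //= n' _; left.
  - apply: gen_in; left; apply/In_prodl; exists t, y; split => //.
    by case: (n) => //=; right.
  - apply: RM; have := @SR_lemma F S R nS nR n 0 t y St Ry; rewrite addn0; apply.
pose Q u := Si n u /\ forall f, M (gcomm u f).
have sQ : subgrp Q.
  split.
  - split; first exact: sub1 (sS _).
    move=> f; have -> : gcomm gone f = gone by gnorm.
    exact: sub1.
  - move=> x y [Sx Mx] [Sy My]; split; first exact: subM (sS _) _ _.
    move=> f; have -> : gcomm (gmul x y) f =
       gmul (gcomm x f) (gmul (gcomm (gcomm x f) y) (gcomm y f)) by gnorm.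
    apply: subM => //; apply: subM => //; apply: RM.
    by apply: comm_genS; apply: SR1; apply: comm_genS.
  - move=> x [Sx Mx]; split; first exact: subV (sS _) _.
    move=> f; have -> : gcomm (ginv x) f =
       ginv (gmul (gcomm x f) (gcomm (gcomm x f) (ginv x))) by gnorm.
    apply: subV => //; apply: subM => //; apply: RM.
    by apply: comm_genS; apply: SR1; apply: comm_genS.
move=> u; apply: (gen_min sM) => z [v [f [Sv _ ->]]].
have : Q v.
  have := Tc _ Sv; apply: (gen_min sQ) => x [Hx|Rx].
    by split; [exact: Ta | exact: Tcomm].
  split; first exact: RS.
  by move=> f0; apply: RM; apply: comm_genS.
by case=> _; apply.
Qed.

Lemma abstract_bound n :
  index_le (Si n.+1) (Ri n.+1) (N ^ (size xs * (size xs).+1 ^ n)).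
Proof.
have [Ta Tb Tc] := mainclaim n.+1.
have nK := iter_normal n.+1 nR.
exists (reps N (T n.+1)); split.
- by rewrite size_reps // size_T.
- move=> i Hi; have := reps_gen (Ri n.+1) (In_nth gone Hi); apply: gen_min; first exact: sS.
  by move=> x [Hx|Rx]; [exact: Ta | exact: RS].
- move=> h Sh.
  have hT : forall t, In t (T n.+1) -> centr (Ri n.+1) t /\ Ri n.+1 (gpow t N).
    move=> t Ht; split; last exact: Tb.
    by move=> f; apply: comm_genS; apply: SR1; apply: Ta.
  have [r Hr Kr] := count_reps nK N_gt0 hT (Tc _ Sh).
  have [i Hi Ei] := nth_In gone Hr.
  by exists i => //; rewrite Ei.
Qed.

End Main.

Unset Implicit Arguments.

Theorem mainTheorem2 (p c k d : nat) (gT : finGroupType) (G B : {group gT})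
    (F : grp) (phi : F -> gT) (R S : F -> Prop) :
  prime p -> 1 <= c ->
  (p.-group G)%g -> (B \subset 'Z(G))%g -> cyclic B -> #|B| = p ^ k ->
  (exists X : {set coset_of B}, #|X| <= d /\ <<X>>%g = (G / B)%g) ->
  is_free F ->
  (forall x y, phi (gmul x y) = (phi x * phi y)%g) ->
  (forall x, phi x \in G) ->
  (forall g, g \in G -> exists x, phi x = g) ->
  (forall x, R x <-> phi x = 1%g) ->
  (forall x, S x <-> phi x \in B) ->
  index_le (iter_comm S (@gfull F) c) (iter_comm R (@gfull F) c)
           (p ^ (d * k * (d + 1) ^ (c - 1))).
Proof.
move=> pr_p c_gt0 _ sBZ cycB oB [X [cardX genX]] _ phiM phiG phiS Rdef Sdef.
have phi1 : phi gone = 1%g.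
  by apply: (mulgI (phi gone)); rewrite -phiM gmul1 mulg1.
have phiV : forall x, phi (ginv x) = ((phi x)^-1)%g.
  by move=> x; apply: (mulIg (phi x)); rewrite -phiM gmulV phi1 mulVg.
have phiP : forall x e, phi (gpow x e) = (phi x ^+ e)%g.
  by move=> x; elim=> [|e IH] //=; rewrite phiM IH expgS.
have phiC : forall x y, phi (gcomm x y) = [~ phi x, phi y]%g.
  by move=> x y; rewrite /gcomm !phiM !phiV /commg /conjg !mulgA.
have phiJ : forall x g, phi (gconj x g) = (phi x ^ phi g)%g.
  by move=> x g; rewrite /gconj !phiM phiV /conjg mulgA.
have nGB : G \subset 'N(B)%g := normal_norm (sub_center_normal sBZ).
have NB : forall x, phi x \in 'N(B)%g by move=> x; apply: (subsetP nGB); apply: phiG.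
have nR : normp R.
  split; first split.
  - by apply/Rdef.
  - by move=> x y /Rdef Rx /Rdef Ry; apply/Rdef; rewrite phiM Rx Ry mulg1.
  - by move=> x /Rdef Rx; apply/Rdef; rewrite phiV Rx invg1.
  by move=> x g /Rdef Rx; apply/Rdef; rewrite phiJ Rx conj1g.
have nS : normp S.
  split; first split.
  - by apply/Sdef; rewrite phi1 group1.
  - by move=> x y /Sdef Sx /Sdef Sy; apply/Sdef; rewrite phiM groupM.
  - by move=> x /Sdef Sx; apply/Sdef; rewrite phiV groupV.
  by move=> x g /Sdef Sx; apply/Sdef; rewrite phiJ memJ_norm.
have sRS : forall x, R x -> S x.
  by move=> x /Rdef Rx; apply/Sdef; rewrite Rx group1.
have cSF : forall s f, S s -> R (gcomm s f).
  move=> s f /Sdef Ss; apply/Rdef; rewrite phiC; apply/eqP/commgP.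
  by rewrite /commute; symmetry; apply: centerC; [apply: phiG | apply: (subsetP sBZ)].
have N_gt0 : 0 < p ^ k by rewrite expn_gt0 prime_gt0.
case/cyclicP: cycB => beta Bbeta.
have Bb : beta \in B by rewrite Bbeta cycle_id.
have [b Pb] : exists b, phi b = beta.
  by apply: phiS; apply: (subsetP (center_sub G)); apply: (subsetP sBZ).
have Sb : S b by apply/Sdef; rewrite Pb.
have RbN : R (gpow b (p ^ k)).
  by apply/Rdef; rewrite phiP Pb -oB Bbeta; exact: expg_order.
have Sgen : forall s, S s -> exists e, R (gmul (ginv (gpow b e)) s).
  move=> s /Sdef; rewrite Bbeta => /cycleP [e He]; exists e.
  by apply/Rdef; rewrite phiM phiV phiP Pb He mulVg.
have sXG : forall C, C \in X -> C \in (G / B)%g by move=> C CX; rewrite -genX; apply: mem_gen.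
have [xs [szxs hx]] : exists xs : seq F, size xs = size (enum X) /\
   forall C, C \in enum X -> exists x, In x xs /\ coset B (phi x) = C.
  have : forall C, C \in enum X -> C \in (G / B)%g by move=> C; rewrite mem_enum; apply: sXG.
  elim: (enum X) => [|C s IH] Hs; first by exists [::].
  have Hs' : forall C', C' \in s -> C' \in (G / B)%g.
    by move=> C' HC'; apply: Hs; rewrite in_cons HC' orbT.
  have [xs [sz h]] := IH Hs'.
  have := Hs C (mem_head _ _); case/morphimP => g Ng Gg ->.
  have [x Px] := phiS g Gg.
  exists (x :: xs); split; first by rewrite /= sz.
  move=> C'; rewrite in_cons => /orP [/eqP ->|HC'].
    by exists x; split; [left|rewrite Px].
  by have [y [Hy Ey]] := h _ HC'; exists y; split; [right|].
have Fgen : forall f, gen (fun x => In x xs \/ S x) f.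
  move=> f; have := mem_quotient B (phiG f); rewrite -genX.
  case/gen_prodgP => n [cc Hc E].
  have [w [Gw Ew]] : exists w, gen (fun x => In x xs \/ S x) w /\
      coset B (phi w) = (\prod_(i < n) cc i)%g.
    elim: n cc Hc {E} => [|n IH] cc Hc.
      by exists gone; split; [apply: gen_one | rewrite big_ord0 phi1 morph1].
    have [w [Gw Ew]] := IH (fun i => cc (widen_ord (leqnSn n) i)) (fun i => Hc _).
    have [x [Hx Ex]] : exists x, In x xs /\ coset B (phi x) = cc ord_max.
      by apply: hx; rewrite mem_enum.
    exists (gmul w x); split; first by apply: gen_mul => //; apply: gen_in; left.
    rewrite big_ord_recr /= phiM morphM //. by rewrite -Ew -Ex.
  have -> : f = gmul w (gmul (ginv w) f) by rewrite gmulVK.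
  apply: gen_mul => //; apply: gen_in; right; apply/Sdef.
  apply: coset_idr; first exact: NB.
  rewrite phiM phiV morphM ?groupV // morphV //.
  change ((coset B (phi w))^-1 * coset B (phi f) = 1)%g.
  by rewrite Ew -E mulVg.
case: c c_gt0 => // n _.
have [l [szl H1 H2]] := abstract_bound nR nS sRS cSF N_gt0 Sb RbN Sgen Fgen n.
exists l; split => //.
apply: leq_trans szl _; rewrite -expnM subn1 /= leq_exp2l ?prime_gt1 //.
have hm : size xs <= d by rewrite szxs -cardE.
rewrite [d * k]mulnC -mulnA leq_mul //; apply: leq_mul => //.
rewrite addn1; elim: (n) => // n' IH; rewrite !expnS; apply: leq_mul => //.
Qed.
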